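(* Let $p,q$ be positive integers and let $m,s$ be positive integers. Then $G_{2^m s}$ has the same parity as $G_s$, and if $G_s$ is even then $\frac12 G_{2^m s}\equiv 1\pmod 2$.
   Context: $A=pq+2$, $B=\sqrt{A^2-4}$, $G_n=\left(\frac{A+B}{2}\right)^n+\left(\frac{A-B}{2}\right)^n$ (an integer). *)

(* Defs.v *)
From Stdlib Require Import Reals ZArith.
Open Scope R_scope.

Definition Aval (p q : nat) : R := INR (p * q) + 2.
Definition Bval (p q : nat) : R := sqrt (Aval p q ^ 2 - 4).
Definition G (p q : nat) (n : nat) : R :=
  ((Aval p q + Bval p q) / 2) ^ n + ((Aval p q - Bval p q) / 2) ^ n.

(* Main.v *)
Require Import Defs.
From Stdlib Require Import Reals ZArith Lia Lra Psatz.
Open Scope R_scope.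

Fixpoint gp (A : Z) (n : nat) : Z * Z :=
  match n with
  | O => (2%Z, A)
  | S n => let (u, v) := gp A n in (v, (A * v - u)%Z)
  end.

Lemma rec2 (x y A : R) (n : nat) : x + y = A -> x * y = 1 ->
  x ^ (S (S n)) + y ^ (S (S n)) = A * (x ^ (S n) + y ^ (S n)) - (x ^ n + y ^ n).
Proof.
  intros HA Hxy. subst A.
  replace (x ^ n + y ^ n) with ((x ^ n + y ^ n) * (x * y)) by (rewrite Hxy; ring).
  simpl; ring.
Qed.

Lemma xy1 p q : ((Aval p q + Bval p q) / 2) * ((Aval p q - Bval p q) / 2) = 1.
Proof.
  unfold Bval.
  assert (H : Aval p q >= 2) by (unfold Aval; pose proof (pos_INR (p*q)); lra).
  assert (H2 : 0 <= Aval p q ^ 2 - 4) by nra.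
  pose proof (sqrt_sqrt _ H2).
  nra.
Qed.

Lemma gp_G p q n :
  IZR (fst (gp (Z.of_nat (p*q) + 2) n)) = G p q n /\
  IZR (snd (gp (Z.of_nat (p*q) + 2) n)) = G p q (S n).
Proof.
  induction n as [|n [IH1 IH2]].
  - simpl. unfold G. split.
    + simpl; lra.
    + rewrite plus_IZR, <- INR_IZR_INZ. unfold Aval. simpl. lra.
  - simpl. destruct (gp _ n) as [u v] eqn:E. simpl in *. split; [exact IH2|].
    rewrite minus_IZR, mult_IZR, IH1, IH2, plus_IZR, <- INR_IZR_INZ.
    unfold G. rewrite (rec2 _ _ (Aval p q) n).
    + unfold Aval; ring.
    + lra.
    + apply xy1.
Qed.

Lemma G_double p q n : G p q (2 * n) = G p q n ^ 2 - 2.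
Proof.
  unfold G. rewrite (Nat.mul_comm 2 n), !pow_mult.
  pose proof (xy1 p q) as H.
  set (x := (Aval p q + Bval p q) / 2) in *.
  set (y := (Aval p q - Bval p q) / 2) in *.
  assert (Hn : x ^ n * y ^ n = 1) by (rewrite <- Rpow_mult_distr, H; apply pow1).
  transitivity ((x ^ n + y ^ n) ^ 2 - 2 * (x ^ n * y ^ n)); [ring|].
  rewrite Hn. ring.
Qed.

Definition gz p q n := fst (gp (Z.of_nat (p*q) + 2) n).

Lemma gz_G p q n : IZR (gz p q n) = G p q n.
Proof. apply gp_G. Qed.

Lemma gz_double p q n : gz p q (2 * n) = (gz p q n ^ 2 - 2)%Z.
Proof.
  apply eq_IZR. rewrite gz_G, minus_IZR, Z.pow_2_r, mult_IZR, gz_G, G_double. simpl. ring.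
Qed.

Lemma par p q m s : Z.even (gz p q (2 ^ m * s)) = Z.even (gz p q s).
Proof.
  induction m as [|m IH].
  - simpl. f_equal. f_equal. lia.
  - replace (2 ^ S m * s)%nat with (2 * (2 ^ m * s))%nat by (simpl; lia).
    rewrite gz_double, <- IH.
    set (c := gz p q (2 ^ m * s)).
    rewrite Z.even_sub, Z.pow_2_r, Z.even_mul.
    destruct (Z.even c); reflexivity.
Qed.

Theorem lemma1 (p q m s : nat) (hp : (0 < p)%nat) (hq : (0 < q)%nat)
  (hm : (0 < m)%nat) (hs : (0 < s)%nat) :
  exists a b : Z,
    IZR a = G p q (2 ^ m * s) /\ IZR b = G p q s /\
    Z.even a = Z.even b /\
    (Z.even b = true -> Z.odd (a / 2) = true).
Proof.
  exists (gz p q (2 ^ m * s)), (gz p q s).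
  split; [apply gz_G|]. split; [apply gz_G|]. split; [apply par|].
  intros Hb.
  destruct m as [|m]; [lia|].
  replace (2 ^ S m * s)%nat with (2 * (2 ^ m * s))%nat by (simpl; lia).
  rewrite gz_double.
  pose proof (par p q m s) as Hc. rewrite Hb in Hc.
  set (c := gz p q (2 ^ m * s)) in *.
  apply Z.even_spec in Hc. destruct Hc as [k Hk]. rewrite Hk.
  replace ((2 * k) ^ 2 - 2)%Z with ((2 * k ^ 2 - 1) * 2)%Z by ring.
  rewrite Z.div_mul by lia.
  rewrite Z.odd_sub, Z.odd_mul. reflexivity.
Qed.
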